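(* Let $\Sigma\mathbb{N}$ be the natural numbers with the Scott topology of the usual order and $\Sigma 2$ the Sierpiński space (the chain $0<1$ with its Scott topology). Both are $S^{\ast}$-well-filtered, but the product space $\Sigma\mathbb{N}\times\Sigma 2$ is not $S^{\ast}$-well-filtered. Consequently, the full subcategory of $\mathbf{Top}_0$ consisting of all $S^{\ast}$-well-filtered spaces and continuous maps is not a reflective subcategory of $\mathbf{Top}_0$.
   Context: $\mathbf{Top}_0$ is the category of $T_0$-spaces and continuous maps; a full subcategory is reflective if its inclusion functor has a left adjoint. For a space $X$, ${\uparrow}$ is taken in the specialization order ($x\le y$ iff $x\in cl\{y\}$); $K(X)$ is the set of nonempty compact saturated (= upper) subsets; a family in $K(X)$ is filtered if any two members contain a common member. $X$ is $S^{\ast}$-well-filtered if for every filtered family $\{K_i\mid i\in I\}\subseteq K(X)$, every $G\in K(X)$ and every nonempty open $U$, $\bigcap_{i}K_i\cap G\subseteq U$ implies $K_i\cap G\subseteq U$ for some $i$. *)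

(* Defs.v *)
From HB Require Import structures.
From mathcomp Require Import all_boot all_order.
From mathcomp Require Import all_classical all_reals all_analysis.
Set Implicit Arguments. Unset Strict Implicit. Unset Printing Implicit Defensive.
Import Order.TTheory.
Local Open Scope classical_set_scope.
Local Open Scope order_scope.

Section ScottDef.
Context {d : Order.disp_t} {T : porderType d}.

Definition directed_set (D : set T) :=
  D !=set0 /\ forall x y, D x -> D y -> exists2 z, D z & x <= z /\ y <= z.

Definition is_sup (D : set T) (s : T) :=
  (forall x, D x -> x <= s) /\ (forall u, (forall x, D x -> x <= u) -> s <= u).

Definition scott_open (U : set T) :=
  (forall x y, x <= y -> U x -> U y) /\
  (forall D s, directed_set D -> is_sup D s -> U s -> D `&` U !=set0).

Lemma scott_openT : scott_open setT.
Proof.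
split=> // D s [[x Dx] _] _ _; by exists x.
Qed.

Lemma scott_openI : setI_closed scott_open.
Proof.
move=> U V [uU sU] [uV sV]; split.
  by move=> x y xy [Ux Vx]; split; [exact: uU Ux|exact: uV Vx].
move=> D s dD supD [Us Vs].
have [x [Dx Ux]] := sU D s dD supD Us.
have [y [Dy Vy]] := sV D s dD supD Vs.
have [z Dz [xz yz]] := dD.2 x y Dx Dy.
by exists z; split=> //; split; [exact: uU Ux|exact: uV Vy].
Qed.

Lemma scott_open_bigU (I : Type) (f : I -> set T) :
  (forall i, scott_open (f i)) -> scott_open (\bigcup_i f i).
Proof.
move=> fo; split.
  by move=> x y xy [i _ fxi]; exists i => //; exact: (fo i).1 fxi.
move=> D s dD supD [i _ fis].
have [x [Dx fxi]] := (fo i).2 D s dD supD fis.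
by exists x; split=> //; exists i.
Qed.

End ScottDef.

Definition scott {d : Order.disp_t} (T : porderType d) : Type := T.

HB.instance Definition _ {d : Order.disp_t} (T : porderType d) :=
  Choice.on (scott T).
HB.instance Definition _ {d : Order.disp_t} (T : porderType d) :=
  isOpenTopological.Build (scott T) (@scott_openT d T) (@scott_openI d T)
    (@scott_open_bigU d T).

Definition SigmaN : topologicalType := scott nat.
Definition Sigma2 : topologicalType := scott bool.

Section WF.
Context {X : topologicalType}.

Definition spec_le (x y : X) := closure [set y] x.

Definition saturated (A : set X) := forall x y, spec_le x y -> A x -> A y.

Definition KX (A : set X) := [/\ A !=set0, compact A & saturated A].

Definition filtered_KX (F : set (set X)) :=
  [/\ F !=set0, F `<=` KX &
      forall A B, F A -> F B -> exists2 C, F C & C `<=` A `&` B].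

End WF.

Definition S_star_well_filtered (X : topologicalType) :=
  forall (F : set (set X)), filtered_KX F ->
  forall (G : set X), KX G ->
  forall (U : set X), open U -> U !=set0 ->
    (\bigcap_(K in F) K) `&` G `<=` U -> exists2 K, F K & K `&` G `<=` U.

(* A full subcategory of Top_0, given by a property P of spaces, is reflective
   iff every T0 space X has a reflection: a T0 space Y with P Y and a continuous
   map eta : X -> Y through which every continuous map from X to a T0 space
   satisfying P factors uniquely (universal arrow = unit of a left adjoint). *)
Definition reflective_in_Top0 (P : topologicalType -> Prop) :=
  forall X : topologicalType, kolmogorov_space X ->
  exists (Y : topologicalType) (eta : X -> Y),
    [/\ kolmogorov_space Y, P Y, continuous eta &
        forall (Z : topologicalType) (f : X -> Z),
          kolmogorov_space Z -> P Z -> continuous f ->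
          exists! g : Y -> Z, continuous g /\ g \o eta = f].

(* Main.v *)
Require Import Defs.
From HB Require Import structures.
From mathcomp Require Import all_boot all_order.
From mathcomp Require Import all_classical all_reals all_analysis.
From mathcomp Require Import zify.
Set Implicit Arguments. Unset Strict Implicit. Unset Printing Implicit Defensive.
Import Order.TTheory.
Local Open Scope classical_set_scope.
Local Open Scope order_scope.

Section ScottLem.
Context {d : Order.disp_t} {T : porderType d}.

Lemma scott_nbhs_up (x y : scott T) (B : set (scott T)) :
  nbhs x B -> (x : T) <= (y : T) -> B y.
Proof.
rewrite nbhsE => -[C [oC Cx] CB] xy; apply: CB.
have sC : scott_open (C : set T) := oC.
exact: sC.1 x y xy Cx.
Qed.

Definition sup_attained := forall (D : set T) s, directed_set D -> is_sup D s -> D s.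

Lemma scott_up_open (A : set (scott T)) : sup_attained ->
  (forall x y : T, x <= y -> A x -> A y) -> open A.
Proof.
move=> sa up; have : scott_open (A : set T).
  split=> // D s dD supD As; exists s; split=> //; exact: sa.
by [].
Qed.

Lemma scott_up_nbhs (x : scott T) : sup_attained ->
  nbhs x [set y : scott T | (x : T) <= (y : T)].
Proof.
move=> sa; rewrite nbhsE; exists [set y : scott T | (x : T) <= (y : T)] => //.
split => //=; apply: scott_up_open => // a b ab xa; exact: le_trans xa ab.
Qed.

End ScottLem.

Lemma sa_nat : @sup_attained _ nat.
Proof.
move=> D s [[x Dx] _] [ub lub]; have [//|nDs] := pselect (D s).
have H : forall y, D y -> (y <= s.-1)%N.
  move=> y Dy; have := ub y Dy; rewrite leEnat => ys.
  have : y != s by apply/eqP => ys'; apply: nDs; rewrite -ys'.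
  lia.
have := lub s.-1 (fun y Dy => (H y Dy : (y <= s.-1)%O)); rewrite leEnat => ss.
have s0 : s = 0%N by lia.
have := H x Dx; rewrite s0 => x0.
by rewrite (_ : 0%N = x) //; lia.
Qed.

Lemma sa_bool : @sup_attained _ bool.
Proof.
move=> D s [[x Dx] _] [ub lub]; case: s ub lub => ub lub.
  have [//|nD] := pselect (D true); exfalso.
  have : (true <= false)%O by apply: lub => -[] // /nD.
  by [].
by have := ub x Dx; case: x Dx.
Qed.

Section ScottLem2.
Context {d : Order.disp_t} {T : porderType d}.

Lemma scott_spec (x y : scott T) : (x : T) <= (y : T) -> spec_le x y.
Proof. by move=> xy B /scott_nbhs_up Bx; exists y; split => //; exact: Bx. Qed.

Lemma scott_spec_le (x y : scott T) : @sup_attained d T -> spec_le x y -> (x : T) <= (y : T).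
Proof. by move=> sa /(_ _ (scott_up_nbhs x sa)) [z [-> ?]]. Qed.

Lemma scott_sat (A : set (scott T)) : saturated A ->
  forall x y : T, x <= y -> A x -> A y.
Proof. by move=> sA x y xy; apply: sA; exact: scott_spec. Qed.

Lemma scott_open_up (A : set (scott T)) : open A ->
  forall x y : T, x <= y -> A x -> A y.
Proof. by move=> oA; have sA : scott_open (A : set T) := oA; exact: sA.1. Qed.

End ScottLem2.

Lemma swf_N : S_star_well_filtered SigmaN.
Proof.
move=> F [[K0 FK0] FK Ffil] G GK U oU [u Uu] sub.
have Uup : forall a b : nat, (a <= b)%N -> U a -> U b.
  by move=> a b ab; apply: (@scott_open_up _ nat) => //; rewrite leEnat.
have Kup : forall K, F K -> forall a b : nat, (a <= b)%N -> K a -> K b.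
  move=> K /FK [_ _ sK] a b ab; apply: (@scott_sat _ nat) => //; by rewrite leEnat.
pose P n := exists2 K, F K & forall k, K k -> (n <= k)%N.
suff H : forall k n, (n + k = u)%N -> P n -> exists2 K, F K & K `&` G `<=` U.
  by apply: (H u 0%N) => //; exists K0 => //.
elim=> [|k IH] n nku [K FK' Kn].
  exists K => // x [Kx Gx]; apply: (Uup u) => //; have := Kn x Kx; lia.
have [Pn1|nP] := pselect (P n.+1); first by apply: (IH n.+1) => //; lia.
have hK : forall K', F K' -> exists2 c, K' c & (c <= n)%N.
  move=> K' FK''; apply: contrapT => nc; apply: nP; exists K' => // c Kc.
  rewrite ltnNge; apply/negP => cn; apply: nc; by exists c.
exists K => // x [Kx Gx]; apply: sub; split => // K' FK''.
have [C FC CKK'] := Ffil K K' FK' FK''.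
have [c Cc cn] := hK C FC.
have [KC K'C] := CKK' c Cc.
have cn' : c = n by have := Kn c KC; lia.
apply: (Kup K' FK'' n) => //; first exact: Kn.
by rewrite -cn'.
Qed.

Lemma swf_2 : S_star_well_filtered Sigma2.
Proof.
move=> F [[K0 FK0] FK Ffil] G GK U oU [u Uu] sub.
have Ut : U true.
  by apply: (@scott_open_up _ bool _ oU u) => //; case: u Uu.
have [[K FK' KU]|nK] := pselect (exists2 K, F K & K `<=` U).
  by exists K => // x [Kx _]; exact: KU.
have Kall : forall K, F K -> forall x, K x.
  move=> K FK'; have [c Kc cU] : exists2 c, K c & ~ U c.
    apply: contrapT => nc; apply: nK; exists K => // c Kc.
    apply: contrapT => cU; apply: nc; by exists c.
  have cf : c = false by case: c Kc cU.
  move=> x; have [_ _ sK] := FK K FK'.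
  apply: (@scott_sat _ bool _ sK c) => //; by rewrite cf.
exists K0 => // x [_ Gx]; apply: sub; split => // K FK'; exact: Kall.
Qed.

Definition XP := (SigmaN * Sigma2)%type.

Lemma XP_nbhs_up (p q : XP) (B : set XP) : nbhs p B ->
  ((p.1 : nat) <= (q.1 : nat))%N -> ((p.2 : bool) <= (q.2 : bool))%O -> B q.
Proof.
move=> [[Q1 Q2] /= [n1 n2] QB] l1 l2; apply: QB; split.
  by apply: (@scott_nbhs_up _ nat _ _ _ n1); rewrite leEnat.
exact: (@scott_nbhs_up _ bool _ _ _ n2).
Qed.

Lemma XP_box_nbhs (p : XP) :
  nbhs p [set q : XP | ((p.1 : nat) <= (q.1 : nat))%N /\ ((p.2 : bool) <= (q.2 : bool))%O].
Proof.
exists ([set y : SigmaN | ((p.1 : nat) <= (y : nat))%O],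
        [set y : Sigma2 | ((p.2 : bool) <= (y : bool))%O]).
  split; [exact: (@scott_up_nbhs _ nat _ sa_nat) | exact: (@scott_up_nbhs _ bool _ sa_bool)].
by move=> q [/= h1 h2]; split => //; rewrite -leEnat.
Qed.

Lemma XP_spec (p q : XP) : spec_le p q ->
  ((p.1 : nat) <= (q.1 : nat))%N /\ ((p.2 : bool) <= (q.2 : bool))%O.
Proof. by move=> /(_ _ (XP_box_nbhs p)) [z [-> ?]]. Qed.

Lemma notcluster {T : topologicalType} (F : set_system T) (p : T) :
  ~ cluster F p -> exists2 A, F A & exists2 B, nbhs p B & forall x, A x -> B x -> False.
Proof.
move=> nc; apply: contrapT => h; apply: nc => A B FA nB; apply: contrapT => e; apply: h.
exists A => //; exists B => // x Ax Bx; apply: e; by exists x.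
Qed.

Definition Kn (n : nat) : set XP := [set p | (p.2 : bool) = true \/ (n <= (p.1 : nat))%N].

Lemma Kn_KX n : KX (Kn n).
Proof.
split.
- by exists ((n : SigmaN), (false : Sigma2)); right.
- move=> F FF FK.
  have [c0|nc0] := pselect (cluster F ((0%N : SigmaN), (true : Sigma2))).
    by exists ((0%N : SigmaN), (true : Sigma2)); split => //; left.
  have [c1|nc1] := pselect (cluster F ((n : SigmaN), (false : Sigma2))).
    by exists ((n : SigmaN), (false : Sigma2)); split => //; right.
  have [A1 FA1 [B1 nB1 AB1]] := notcluster nc0.
  have [A2 FA2 [B2 nB2 AB2]] := notcluster nc1.
  have [p [[A1p A2p] [Kp|Kp]]] := filter_ex (filterI (filterI FA1 FA2) FK).
    exfalso; apply: (AB1 p A1p); apply: (XP_nbhs_up nB1) => //=; by rewrite Kp.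
  exfalso; apply: (AB2 p A2p); apply: (XP_nbhs_up nB2) => //=.
- move=> p q /XP_spec [l1 l2] [Kp|Kp]; [left|right].
    by move: l2; rewrite Kp; case: (q.2 : bool).
  exact: leq_trans Kp l1.
Qed.

Lemma not_swf_XP : ~ S_star_well_filtered XP.
Proof.
move=> H.
pose Fam := [set K : set XP | exists n, K = Kn n].
pose U := [set p : XP | (p.2 : bool) = true].
have oU : open U.
  rewrite openE => p Up.
  exists (setT, [set y : Sigma2 | ((p.2 : bool) <= (y : bool))%O]).
    split; [exact: filterT | exact: (@scott_up_nbhs _ bool _ sa_bool)].
  move=> q [_ /=]; rewrite /U /= in Up *; rewrite Up; by case: (q.2 : bool).
have fF : filtered_KX Fam.
  split.
  - by exists (Kn 0); exists 0%N.
  - by move=> K [n ->]; exact: Kn_KX.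
  - move=> A B [a ->] [b ->]; exists (Kn (maxn a b)); first by exists (maxn a b).
    move=> p [Kp|Kp]; split; try by left.
      by right; lia.
    by right; lia.
have := H Fam fF (Kn 0) (Kn_KX 0) U oU.
case.
- by exists ((0%N : SigmaN), (true : Sigma2)).
- move=> p [Fp _]; have [] := Fp (Kn (p.1 : nat).+1); first by exists (p.1 : nat).+1.
    by [].
  by rewrite ltnn.
- move=> K [n ->] sub.
  have := sub ((n : SigmaN), (false : Sigma2)) (conj (or_intror (leqnn n)) (or_intror (leq0n n))).
  by [].
Qed.

Lemma cont_spec {X Y : topologicalType} (f : X -> Y) x y :
  continuous f -> spec_le x y -> spec_le (f x) (f y).
Proof.
move=> cf xy B nB; have [z [zy Bz]] := xy _ (cf x B nB).
by exists (f y); split => //; rewrite -zy.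
Qed.

Lemma KX_img {X Y : topologicalType} (e : X -> Y) (h : Y -> X) (K : set X) :
  continuous e -> continuous h -> cancel e h -> cancel h e -> KX K -> KX (e @` K).
Proof.
move=> ce ch eh he [[k Kk] cK sK]; split.
- by exists (e k); exists k.
- by apply: continuous_compact => //; exact: continuous_subspaceT.
- move=> y1 y2 sy [x1 Kx1 ex1]; exists (h y2); last exact: he.
  apply: (sK x1) => //; rewrite -[x1]eh ex1; exact: cont_spec.
Qed.

Lemma swf_transfer {X Y : topologicalType} (e : X -> Y) (h : Y -> X) :
  continuous e -> continuous h -> cancel e h -> cancel h e ->
  S_star_well_filtered Y -> S_star_well_filtered X.
Proof.
move=> ce ch eh he HY F [[K0 FK0] FK Ffil] G GK U oU [u Uu] sub.
pose F' := [set K' | exists2 K, F K & K' = e @` K].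
have fF' : filtered_KX F'.
  split.
  - by exists (e @` K0); exists K0.
  - by move=> K' [K FK' ->]; apply: (KX_img ce ch eh he); exact: FK.
  - move=> A' B' [A FA ->] [B FB ->]; have [C FC CAB] := Ffil A B FA FB.
    exists (e @` C); first by exists C.
    by move=> y [c Cc <-]; have [Ac Bc] := CAB c Cc; split; exists c.
have oU' : open (h @^-1` U) by move/continuousP: ch => /(_ U oU).
have := HY F' fF' (e @` G) (KX_img ce ch eh he GK) (h @^-1` U) oU'.
case.
- by exists (e u); rewrite /= eh.
- move=> y [Fy [g Gg gy]]; rewrite /=; apply: sub; split; last by rewrite -gy eh.
  move=> K FK'; have [k Kk ky] := Fy (e @` K) (ex_intro2 _ _ K FK' erefl).
  by rewrite -ky eh.
- move=> K' [K FK' ->] sub'; exists K => // x [Kx Gx].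
  have := sub' (e x) (conj (ex_intro2 _ _ x Kx erefl) (ex_intro2 _ _ x Gx erefl)).
  by rewrite /= eh.
Qed.

Lemma kolmo_of {X : topologicalType} :
  (forall x y : X, spec_le x y -> spec_le y x -> x = y) -> kolmogorov_space X.
Proof.
move=> anti x y xy.
have notspec : forall a b : X, ~ spec_le a b -> exists2 B, nbhs a B & ~ B b.
  move=> a b ns; apply: contrapT => h; apply: ns => B nB; apply: contrapT => e.
  apply: h; exists B => // Bb; apply: e; by exists b.
have [syx|nyx] := pselect (spec_le y x).
  have [sxy|nxy] := pselect (spec_le x y); first by exfalso; move/eqP: xy; apply; exact: anti.
  have [B nB nBy] := notspec _ _ nxy.
  by exists B; left; split; [exact: mem_set | apply: mem_set].
have [B nB nBx] := notspec _ _ nyx.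
by exists B; right; split; [exact: mem_set | apply: mem_set].
Qed.

Lemma kolmo_N : kolmogorov_space SigmaN.
Proof.
apply: kolmo_of => x y sxy syx; apply: (@le_anti _ nat); apply/andP; split.
  exact: (@scott_spec_le _ nat _ _ sa_nat).
exact: (@scott_spec_le _ nat _ _ sa_nat).
Qed.

Lemma kolmo_2 : kolmogorov_space Sigma2.
Proof.
apply: kolmo_of => x y sxy syx; apply: (@le_anti _ bool); apply/andP; split.
  exact: (@scott_spec_le _ bool _ _ sa_bool).
exact: (@scott_spec_le _ bool _ _ sa_bool).
Qed.

Lemma kolmo_XP : kolmogorov_space XP.
Proof.
apply: kolmo_of => -[x1 x2] [y1 y2] /XP_spec /= [a1 a2] /XP_spec /= [b1 b2].
have -> : x1 = y1 by apply/eqP; rewrite eqn_leq a1 b1.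
have -> : x2 = y2 by move: a2 b2; case: (x2 : bool); case: (y2 : bool).
by [].
Qed.

Lemma not_reflective : ~ reflective_in_Top0 S_star_well_filtered.
Proof.
move=> R; have [Y [eta [kY PY ceta univ]]] := R XP kolmo_XP.
have cfst : continuous (fst : XP -> SigmaN) by move=> p; exact: cvg_fst.
have csnd : continuous (snd : XP -> Sigma2) by move=> p; exact: cvg_snd.
have [g1 [[c1 e1] _]] := univ SigmaN fst kolmo_N swf_N cfst.
have [g2 [[c2 e2] _]] := univ Sigma2 snd kolmo_2 swf_2 csnd.
pose h := fun y : Y => ((g1 y, g2 y) : XP).
have ch : continuous h by move=> y; exact: (@cvg_pair _ _ _ (nbhs y) (nbhs (g1 y)) (nbhs (g2 y)) _ _ _ g1 g2 (c1 y) (c2 y)).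
have he : cancel eta h.
  move=> p; rewrite /h; have := congr1 (fun f => f p) e1; have := congr1 (fun f => f p) e2.
  by rewrite /= => -> ->; case: p.
have eh : cancel h eta.
  have [g [[cg eg] ug]] := univ Y eta kY PY ceta.
  have idg : g = id by apply: ug; split => //; move=> y; exact: cvg_id.
  have ehg : g = eta \o h.
    apply: ug; split; last by apply: funext => p /=; rewrite he.
    by move=> y; apply: continuous_comp; [exact: ch | exact: ceta].
  by move=> y; have := congr1 (fun f => f y) ehg; rewrite idg.
exact: not_swf_XP (swf_transfer ceta ch he eh PY).
Qed.

Theorem mainTheorem17 :
  [/\ S_star_well_filtered SigmaN,
      S_star_well_filtered Sigma2,
      ~ S_star_well_filtered (SigmaN * Sigma2)%type &
      ~ reflective_in_Top0 S_star_well_filtered].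
Proof. split; [exact: swf_N | exact: swf_2 | exact: not_swf_XP | exact: not_reflective]. Qed.
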